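(* Let $\Sigma$ be an alphabet and $\mathcal{A}$ a reversible weighted automaton over $\mathbb{F}_2$ and $\Sigma$ with precisely one initial state. Then $\|\mathcal{A}\|=\underline{L}$ (characteristic series over $\mathbb{F}_2$) for some $L\in\mathrm{RevL}_1(\mathbb{B},\Sigma)$. As a consequence, $\mathrm{RevL}_1(\mathbb{F}_2,\Sigma)=\mathrm{RevL}_1(\mathbb{B},\Sigma)$.
   Context: $\mathbb{F}_2$ is the two-element field and $\mathbb{B}=(\{0,1\},\lor,\land,0,1)$ the Boolean semiring. For a semiring $S$ and finite nonempty alphabet $\Sigma$, a series is a map $r\colon\Sigma^*\to S$ with value $(r,w)$, support $\mathrm{supp}(r)=\{w\mid(r,w)\neq0\}$; the characteristic series $\underline{L}$ of $L\subseteq\Sigma^*$ has coefficient $1$ on $L$ and $0$ elsewhere. A weighted automaton over $S$ and $\Sigma$ is $\mathcal{A}=(Q,\sigma,\iota,\tau)$ with $Q$ finite, $\sigma\colon Q\times\Sigma\times Q\to S$, $\iota,\tau\colon Q\to S$; a run on $w=a_1\cdots a_t$ is $q_0a_1q_1\cdots a_tq_t$ with all $\sigma(q_{k-1},a_k,q_k)\neq0$, of weight $\iota(q_0)\sigma(q_0,a_1,q_1)\cdots\sigma(q_{t-1},a_t,q_t)\tau(q_t)$, and $(\|\mathcal{A}\|,w)$ is the sum of weights of all runs on $w$. An initial state is a state $q$ with $\iota(q)\neq0$. $\mathcal{A}$ is reversible if for all $p,p',q,q'\in Q$, $a\in\Sigma$: $\sigma(p,a,q)\neq0\neq\sigma(p,a,q')$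 implies $q=q'$, and $\sigma(p,a,q)\neq0\neq\sigma(p',a,q)$ implies $p=p'$. $\mathrm{RevL}_1(S,\Sigma)$ is the set of supports of series realised by reversible weighted automata over $S$ and $\Sigma$ with precisely one initial state. *)

(* Defs.v *)
From HB Require Import structures.
From mathcomp Require Import all_boot all_order all_algebra.
Set Implicit Arguments. Unset Strict Implicit. Unset Printing Implicit Defensive.
Import GRing.Theory.
Local Open Scope ring_scope.

Definition boolSR : Type := bool.
HB.instance Definition _ := Choice.on boolSR.

Lemma boolSR_one_neq0 : (true : boolSR) != false. Proof. by []. Qed.

HB.instance Definition _ := GRing.isNzSemiRing.Build boolSR
  orbA orbC orFb andbA andTb andbT andb_orl andb_orr andFb andbF boolSR_one_neq0.

Record wautomaton (S : nzSemiRingType) (Sig : finType) (Q : finType) := WAut {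
  wsigma : Q -> Sig -> Q -> S;
  wiota  : Q -> S;
  wtau   : Q -> S }.

Section Semantics.
Variables (S : nzSemiRingType) (Sig Q : finType) (A : wautomaton S Sig Q).

Definition is_run (w : seq Sig) (qs : (size w).+1.-tuple Q) : bool :=
  [forall k : 'I_(size w),
     wsigma A (tnth qs (inord k)) (tnth (in_tuple w) k) (tnth qs (inord k.+1)) != 0].

Definition run_weight (w : seq Sig) (qs : (size w).+1.-tuple Q) : S :=
  wiota A (tnth qs ord0) *
  (\prod_(k < size w)
     wsigma A (tnth qs (inord k)) (tnth (in_tuple w) k) (tnth qs (inord k.+1))) *
  wtau A (tnth qs ord_max).

Definition behaviour (w : seq Sig) : S :=
  \sum_(qs : (size w).+1.-tuple Q | is_run qs) run_weight qs.

Definition reversible : Prop :=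
  (forall (p q q' : Q) (a : Sig),
      wsigma A p a q != 0 -> wsigma A p a q' != 0 -> q = q') /\
  (forall (p p' q : Q) (a : Sig),
      wsigma A p a q != 0 -> wsigma A p' a q != 0 -> p = p').

Definition one_initial : Prop := #|[pred q : Q | wiota A q != 0]| = 1%N.

End Semantics.

Definition language (Sig : finType) := seq Sig -> bool.

Definition char_series (S : nzSemiRingType) (Sig : finType) (L : language Sig)
  : seq Sig -> S := fun w => if L w then 1 else 0.

Definition RevL1 (S : nzSemiRingType) (Sig : finType) (L : language Sig) : Prop :=
  exists (Q : finType) (A : wautomaton S Sig Q),
    reversible A /\ one_initial A /\
    forall w : seq Sig, L w = (behaviour A w != 0).

(* Main.v *)
Require Import Defs.
From HB Require Import structures.
From mathcomp Require Import all_boot all_order all_algebra.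
Set Implicit Arguments. Unset Strict Implicit. Unset Printing Implicit Defensive.
Import GRing.Theory.
Local Open Scope ring_scope.

Section Gen.
Variables (S : nzSemiRingType) (Sig Q : finType) (A : wautomaton S Sig Q).

Lemma run_uniq (w : seq Sig) (qs qs' : (size w).+1.-tuple Q) :
  reversible A -> one_initial A ->
  is_run A qs -> is_run A qs' -> run_weight A qs != 0 -> run_weight A qs' != 0 ->
  qs = qs'.
Proof.
move=> [det _] one r r' n n'.
have ini : forall (t : (size w).+1.-tuple Q), run_weight A t != 0 ->
    wiota A (tnth t ord0) != 0.
  move=> t nz; apply/eqP=> e; move: nz; by rewrite /run_weight e !mul0r eqxx.
have [x Hx] : exists x, [pred q : Q | wiota A q != 0] =i pred1 x.
  by apply/card1P; apply/eqP; exact: one.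
have e0 : tnth qs ord0 = tnth qs' ord0.
  have := Hx (tnth qs ord0); have := Hx (tnth qs' ord0).
  rewrite !inE (ini _ n) (ini _ n') => /esym/eqP -> /esym/eqP ->; done.
have key : forall k, (k <= size w)%N ->
    tnth qs (inord k) = tnth qs' (inord k).
  elim=> [|k IH] hk.
    by rewrite (_ : inord 0 = ord0) //; apply: val_inj; rewrite /= inordK.
  have hk' : (k < size w)%N by [].
  move/forallP: r => /(_ (Ordinal hk')) /= r.
  move/forallP: r' => /(_ (Ordinal hk')) /= r'.
  rewrite (IH (ltnW hk)) in r.
  exact: det r r'.
apply: eq_from_tnth => i.
have -> : i = inord i by apply: val_inj; rewrite /= inordK.
apply: key; by rewrite -ltnS.
Qed.

Lemma behaviour_ne0 (w : seq Sig) : reversible A -> one_initial A ->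
  (behaviour A w != 0) =
  [exists qs : (size w).+1.-tuple Q, is_run A qs && (run_weight A qs != 0)].
Proof.
move=> rev one.
case: existsP => [[qs0 /andP [r0 n0]] | none].
  rewrite /behaviour (bigD1 qs0) //= big1 ?addr0 //.
  move=> qs /andP [r ne]; apply/eqP; apply: contraR ne => nz.
  by apply/eqP; exact: (run_uniq rev one r r0 nz n0).
rewrite /behaviour big1 ?eqxx // => qs r.
have [//|nz] := eqVneq (run_weight A qs) 0; exfalso; apply: none.
by exists qs; rewrite r nz.
Qed.
End Gen.

Section Map.
Variables (S T : nzSemiRingType) (h : S -> T).
Hypothesis hM : forall x y, h (x * y) = h x * h y.
Hypothesis h1 : h 1 = 1.
Hypothesis h0 : forall x, (h x != 0) = (x != 0).
Variables (Sig Q : finType) (A : wautomaton S Sig Q).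

Definition mapA : wautomaton T Sig Q :=
  WAut (fun p a q => h (wsigma A p a q)) (fun q => h (wiota A q)) (fun q => h (wtau A q)).

Lemma mapA_rev : reversible A -> reversible mapA.
Proof.
move=> [d1 d2]; split => /=.
  by move=> p q q' a; rewrite !h0; apply: d1.
by move=> p p' q a; rewrite !h0; apply: d2.
Qed.

Lemma mapA_one : one_initial A -> one_initial mapA.
Proof.
rewrite /one_initial => <-; apply: eq_card => q; by rewrite !inE /= h0.
Qed.

Lemma mapA_run w (qs : (size w).+1.-tuple Q) : is_run mapA qs = is_run A qs.
Proof. by apply: eq_forallb => k /=; rewrite h0. Qed.

Lemma mapA_weight w (qs : (size w).+1.-tuple Q) :
  run_weight mapA qs = h (run_weight A qs).
Proof.
rewrite /run_weight /= !hM; congr (_ * _ * _).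
by rewrite (big_morph h hM h1).
Qed.

Lemma mapA_beh w : reversible A -> one_initial A ->
  (behaviour mapA w != 0) = (behaviour A w != 0).
Proof.
move=> rev one.
rewrite (behaviour_ne0 w (mapA_rev rev) (mapA_one one)) (behaviour_ne0 w rev one).
by apply: eq_existsb => qs; rewrite mapA_run mapA_weight h0.
Qed.
End Map.

Definition g2b (x : 'F_2) : boolSR := x != 0.
Definition b2g (b : boolSR) : 'F_2 := if b then 1 else 0.

Lemma F2_cases (x : 'F_2) : x = 0 \/ x = 1.
Proof.
case: x => [[|[|n]] Hn]; [left | right |]; try by apply: val_inj.
done.
Qed.

Lemma g2bM x y : g2b (x * y) = g2b x * g2b y.
Proof. by rewrite /g2b mulf_eq0 negb_or. Qed.
Lemma g2b1 : g2b 1 = 1. Proof. by rewrite /g2b oner_eq0. Qed.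
Lemma g2b0 x : (g2b x != 0) = (x != 0). Proof. by rewrite /g2b; case: (x != 0). Qed.

Lemma b2gM x y : b2g (x * y) = b2g x * b2g y.
Proof. by case: x; case: y; rewrite /b2g /= ?mul0r ?mulr0 ?mulr1. Qed.
Lemma b2g1 : b2g 1 = 1. Proof. by []. Qed.
Lemma b2g0 x : (b2g x != 0) = (x != 0). Proof. by case: x; rewrite /b2g ?oner_eq0. Qed.


Theorem proposition4 (Sig : finType) (hSig : (0 < #|Sig|)%N)
    (Q : finType) (A : wautomaton 'F_2 Sig Q) :
  reversible A -> one_initial A ->
  (exists L : language Sig,
      RevL1 boolSR L /\ forall w : seq Sig, behaviour A w = char_series 'F_2 L w) /\
  (forall L : language Sig, RevL1 'F_2 L <-> RevL1 boolSR L).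
Proof.
move=> rev one; split.
  exists (fun w => behaviour A w != 0); split.
    exists Q, (mapA g2b A); split; unfold reverse_coercion; first exact (mapA_rev g2b0 rev).
    split; first exact (mapA_one g2b0 one).
    by move=> w; rewrite (mapA_beh g2bM g2b1 g2b0).
  move=> w; rewrite /char_series.
  by case: (F2_cases (behaviour A w)) => ->; rewrite ?eqxx ?oner_eq0.
move=> L; split.
  move=> [Q' [A' [r [o e]]]].
  exists Q', (mapA g2b A'); unfold reverse_coercion; split; first exact (mapA_rev g2b0 r).
  split; first exact (mapA_one g2b0 o).
  by move=> w; rewrite (mapA_beh g2bM g2b1 g2b0).
move=> [Q' [A' [r [o e]]]].
exists Q', (mapA b2g A'); try unfold reverse_coercion; split; first exact (mapA_rev b2g0 r).
split; first exact (mapA_one b2g0 o).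
by move=> w; rewrite (mapA_beh b2gM b2g1 b2g0).
Qed.
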